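(* Let $n>5$ with $n\equiv 0\pmod 4$, and consider even $r\in[2,n-2]$. (i) For $r\equiv 0\pmod 4$, $E(D_n^s[r,\boldsymbol{n-r}])$ is strictly increasing in $r$; hence $E(D_n^s[n-4,\boldsymbol 4])>E(D_n^s[n-8,\boldsymbol 8])>\dots>E(D_n^s[8,\boldsymbol{n-8}])>E(D_n^s[4,\boldsymbol{n-4}])$, and the maximum over such $r$ is attained by $D_n^s[n-4,\boldsymbol 4]$ (negative cycle of length $4$). (ii) For $r\equiv 2\pmod 4$, $E(D_n^s[r,\boldsymbol{n-r}])$ is strictly decreasing in $r$; hence $E(D_n^s[2,\boldsymbol{n-2}])>E(D_n^s[6,\boldsymbol{n-6}])>\dots>E(D_n^s[n-6,\boldsymbol 6])>E(D_n^s[n-2,\boldsymbol 2])$, and the maximum over such $r$ is attained at $r=2$.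
   Context: A signed digraph (sidigraph) is a digraph in which every arc carries a sign $+1$ or $-1$; its adjacency matrix $A(S)=[a_{ij}]$ has $a_{ij}$ equal to the sign of the arc $w_iw_j$ if it exists and $0$ otherwise. If $\rho_1,\dots,\rho_n$ are the eigenvalues of $A(S)$, the energy of $S$ is $E(S)=\sum_{k=1}^n|\mathrm{Re}(\rho_k)|$. The sign of a directed cycle is the product of the signs of its arcs. For $k\ge 2$, $C_k$ denotes a directed cycle of length $k$ with sign $+1$ and $\boldsymbol{C}_k$ a directed cycle of length $k$ with sign $-1$. It is known that $E(C_k)=2\cot\frac{\pi}{k}$ if $k\equiv0\pmod 4$, $2\csc\frac{\pi}{k}$ if $k\equiv 2\pmod 4$, $\csc\frac{\pi}{2k}$ if $k$ is odd; and $E(\boldsymbol C_k)=2\csc\frac{\pi}{k}$ if $k\equiv0\pmod 4$, $2\cot\frac{\pi}{k}$ if $k\equiv 2\pmod 4$, $\csc\frac{\pi}{2k}$ if $k$ is odd. For integers $p,q\ge 2$ with $p+q\le n$, $D_n^s[p,q]$, $D_n^s[\boldsymbol p,\boldsymbol q]$, $D_n^s[\boldsymbol p,q]$, $D_n^s[p,\boldsymbol q]$ denote an $n$-vertex sidigraph whose only directed cycles are two vertex-disjoint cycles of lengths $p$ and $q$ (all other vertices lying on no directed cycle), where a bold entry indicates that the cycle of that length is negative and a non-bold entry that it is positive. Its energy is the sum of the energies of its two cycles, e.g. $E(D_n^s[p,\boldsymbol q])=E(C_p)+E(\boldsymbol C_q)$; in particular the order of the two entries does not matter. *)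

(* Defs.v *)
From Stdlib Require Import Reals Arith.
Open Scope R_scope.

Definition cot (x : R) : R := cos x / sin x.
Definition csc (x : R) : R := / sin x.

Definition E_poscycle (k : nat) : R :=
  if (k mod 4 =? 0)%nat then 2 * cot (PI / INR k)
  else if (k mod 4 =? 2)%nat then 2 * csc (PI / INR k)
  else csc (PI / (2 * INR k)).

Definition E_negcycle (k : nat) : R :=
  if (k mod 4 =? 0)%nat then 2 * csc (PI / INR k)
  else if (k mod 4 =? 2)%nat then 2 * cot (PI / INR k)
  else csc (PI / (2 * INR k)).

(* Energy of D_n^s[p, bold q]: positive p-cycle and negative q-cycle,
   vertex-disjoint, all other vertices on no cycle.  E = E(C_p) + E(bold C_q). *)
Definition E_D_pos_neg (p q : nat) : R := E_poscycle p + E_negcycle q.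

(* Main.v *)
Require Import Defs.
From Stdlib Require Import Reals Arith Lra Lia Psatz.
From Coquelicot Require Import Coquelicot.
Open Scope R_scope.
Lemma key b : 0 < b <= PI/2 -> b*b * cos b < sin b * sin b.
Proof.
intros [H1 H2].
assert (HP := PI_4). assert (HP2 := PI_RGT_0).
destruct (sin_bound b 0) as [Hs _]; try lra.
destruct (cos_bound b 0) as [_ Hc]; try lra.
unfold sin_approx, cos_approx in *; simpl in *.
unfold sin_term, cos_term in *; simpl in *.
assert (Hs' : b - b*b*b/6 <= sin b) by lra.
assert (Hc' : cos b <= 1 - b*b/2 + b*b*b*b/24) by lra.
clear Hs Hc.
assert (b <= 2) by lra.
assert (0 < b - b*b*b/6) by nra.
assert (sin b * sin b >= (b - b*b*b/6)*(b - b*b*b/6)) by nra.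
assert (b*b*cos b <= b*b*(1 - b*b/2 + b*b*b*b/24)) by (apply Rmult_le_compat_l; nra).
assert (0 < b*b*b*b*(12 - b*b)) by (assert (0 < b*b) by nra; assert (0<b*b*b*b) by nra; apply Rmult_lt_0_compat; nra).
nra.
Qed.
Lemma ang t : 2 <= t -> 0 < PI/t <= PI/2 /\ 0 < sin (PI/t).
Proof.
intros H. assert (HP2 := PI_RGT_0).
assert (0 < PI/t) by (apply Rdiv_lt_0_compat; lra).
assert (PI/t <= PI/2) by (apply Rmult_le_compat_l; [lra| apply Rinv_le_contravar; lra]).
split; [lra|]. apply sin_gt_0; lra.
Qed.
Lemma der (N t : R) : 2 <= t <= N - 2 ->
  is_derive (fun t => 2 * (cos (PI/t) / sin (PI/t)) + 2 * / sin (PI / (N - t))) t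
   (2*PI/(t^2 * (sin (PI/t))^2) - 2*PI*cos (PI/(N-t))/((N-t)^2 * (sin (PI/(N-t)))^2)).
Proof.
intros H. destruct (ang t) as [_ H1]; [lra|]. destruct (ang (N-t)) as [_ H2]; [lra|].
unfold Rdiv, Rminus in *.
auto_derive.
{ repeat split; lra. }
assert (E := sin2_cos2 (PI * / t)). unfold Rsqr in E.
field_simplify; try (repeat split; lra).
replace (cos (PI * / t) ^ 2) with (1 - sin (PI * / t) ^ 2) by (simpl; lra).
f_equal; ring.
Qed.
Lemma derpos (N t : R) : 2 <= t <= N - 2 ->
  0 < 2*PI/(t^2 * (sin (PI/t))^2) - 2*PI*cos (PI/(N-t))/((N-t)^2 * (sin (PI/(N-t)))^2).
Proof.
intros H. assert (HP2 := PI_RGT_0).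
destruct (ang t) as [Ha H1]; [lra|]. destruct (ang (N-t)) as [Hb H2]; [lra|].
assert (K := key (PI/(N-t)) Hb).
assert (Ht : sin (PI/t) < PI/t) by (apply sin_lt_x; lra).
assert (A : t * sin (PI/t) <= PI).
{ replace PI with (t * (PI/t)) at 2 by (field; lra). apply Rmult_le_compat_l; lra. }
assert (B : PI*PI*cos (PI/(N-t)) < (N-t)*(N-t)*(sin (PI/(N-t)) * sin (PI/(N-t)))).
{ replace (PI*PI) with ((N-t)*(N-t)*(PI/(N-t)*(PI/(N-t)))) by (field; lra).
  rewrite !Rmult_assoc. apply Rmult_lt_compat_l; [lra|]. apply Rmult_lt_compat_l; [lra|].
  rewrite <- Rmult_assoc. exact K. }
set (X := t^2 * sin (PI/t)^2). set (Y := (N-t)^2 * sin (PI/(N-t))^2).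
assert (HX : 0 < X <= PI*PI).
{ unfold X. split. apply Rmult_lt_0_compat; apply pow_lt; lra.
  replace (t^2 * sin (PI/t)^2) with ((t*sin(PI/t))*(t*sin(PI/t))) by ring.
  assert (0 < t*sin(PI/t)) by (apply Rmult_lt_0_compat; lra). nra. }
assert (HY : PI*PI*cos (PI/(N-t)) < Y) by (unfold Y; simpl; lra).
assert (0 < Y) by (unfold Y; apply Rmult_lt_0_compat; apply pow_lt; lra).
apply Rlt_Rminus.
apply (Rmult_lt_reg_r (X*Y)); [nra|].
unfold Rdiv.
replace (2 * PI * cos (PI * / (N - t)) * / Y * (X * Y)) with (2*PI*cos (PI * / (N - t))*X) by (field; lra).
replace (2 * PI * / X * (X * Y)) with (2*PI*Y) by (field; lra).
fold (PI/(N-t)).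
assert (cos (PI/(N-t)) >= 0).
{ apply Rle_ge, cos_ge_0; lra. }
assert (cos (PI/(N-t)) * X <= cos (PI/(N-t)) * (PI*PI)) by (apply Rmult_le_compat_l; lra).
nra.
Qed.
Definition F (N t : R) : R := 2 * cot (PI/t) + 2 * csc (PI/(N-t)).
Lemma mono N x y : 2 <= x -> x < y -> y <= N - 2 -> F N x < F N y.
Proof.
intros H1 H2 H3.
destruct (MVT_cor2 (F N) (fun t => 2*PI/(t^2 * (sin (PI/t))^2) - 2*PI*cos (PI/(N-t))/((N-t)^2 * (sin (PI/(N-t)))^2)) x y H2) as [c [Hc Hc2]].
{ intros c Hc. apply is_derive_Reals. unfold F, cot, csc. apply der. lra. }
assert (0 < 2*PI/(c^2 * (sin (PI/c))^2) - 2*PI*cos (PI/(N-c))/((N-c)^2 * (sin (PI/(N-c)))^2)) by (apply derpos; lra).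
assert (0 < F N y - F N x) by (rewrite Hc; apply Rmult_lt_0_compat; lra).
lra.
Qed.

Lemma modc a k c : (c < 4)%nat -> a = (4*k + c)%nat -> (a mod 4 = c)%nat.
Proof. intros H E. symmetry. apply (Nat.mod_unique a 4 k c H E). Qed.

Lemma decomp a : exists k, a = (4*k + a mod 4)%nat.
Proof. exists (a/4)%nat. apply Nat.div_mod_eq. Qed.

Lemma E0 n r : (r <= n)%nat -> (r mod 4 = 0)%nat -> ((n - r) mod 4 = 0)%nat ->
  E_D_pos_neg r (n - r) = F (INR n) (INR r).
Proof.
intros H A B. unfold E_D_pos_neg, E_poscycle, E_negcycle, F. rewrite A, B. simpl.
rewrite minus_INR by exact H. reflexivity.
Qed.

Lemma E2 n r : (r <= n)%nat -> (r mod 4 = 2)%nat -> ((n - r) mod 4 = 2)%nat ->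
  E_D_pos_neg r (n - r) = F (INR n) (INR (n - r)).
Proof.
intros H A B. unfold E_D_pos_neg, E_poscycle, E_negcycle, F. rewrite A, B. simpl.
rewrite minus_INR by exact H.
replace (INR n - (INR n - INR r)) with (INR r) by ring. ring.
Qed.

Theorem lemma3p3 (n : nat) (Hn : (5 < n)%nat) (Hn4 : (n mod 4 = 0)%nat) :
  (* (i) r ≡ 0 mod 4: strictly increasing, maximum at r = n-4 *)
  ((forall r r' : nat,
      (2 <= r)%nat -> (r' <= n - 2)%nat -> (r mod 4 = 0)%nat -> (r' mod 4 = 0)%nat ->
      (r < r')%nat ->
      E_D_pos_neg r (n - r) < E_D_pos_neg r' (n - r')) /\
   (forall r : nat,
      (2 <= r)%nat -> (r <= n - 2)%nat -> (r mod 4 = 0)%nat ->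
      E_D_pos_neg r (n - r) <= E_D_pos_neg (n - 4) 4)) /\
  (* (ii) r ≡ 2 mod 4: strictly decreasing, maximum at r = 2 *)
  ((forall r r' : nat,
      (2 <= r)%nat -> (r' <= n - 2)%nat -> (r mod 4 = 2)%nat -> (r' mod 4 = 2)%nat ->
      (r < r')%nat ->
      E_D_pos_neg r' (n - r') < E_D_pos_neg r (n - r)) /\
   (forall r : nat,
      (2 <= r)%nat -> (r <= n - 2)%nat -> (r mod 4 = 2)%nat ->
      E_D_pos_neg r (n - r) <= E_D_pos_neg 2 (n - 2))).
Proof.
destruct (decomp n) as [m Hm]. rewrite Hn4 in Hm.
assert (I0 : forall r, (2 <= r)%nat -> (r <= n - 2)%nat -> (r mod 4 = 0)%nat ->
   (r <= n - 4)%nat /\ ((n - r) mod 4 = 0)%nat /\ E_D_pos_neg r (n - r) = F (INR n) (INR r)).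
{ intros r H1 H2 H3. destruct (decomp r) as [k Hk]. rewrite H3 in Hk.
  assert (Hle : (r <= n - 4)%nat) by lia.
  assert (Hm2 : ((n - r) mod 4 = 0)%nat) by (apply (modc _ (m - k)); lia).
  split; [exact Hle|]. split; [exact Hm2|]. apply E0; [lia|assumption|assumption]. }
assert (I2 : forall r, (2 <= r)%nat -> (r <= n - 2)%nat -> (r mod 4 = 2)%nat ->
   ((n - r) mod 4 = 2)%nat /\ E_D_pos_neg r (n - r) = F (INR n) (INR (n - r))).
{ intros r H1 H2 H3. destruct (decomp r) as [k Hk]. rewrite H3 in Hk.
  assert (Hm2 : ((n - r) mod 4 = 2)%nat) by (apply (modc _ (m - k - 1)); lia).
  split; [exact Hm2|]. apply E2; [lia|assumption|assumption]. }
assert (Mn : forall a b, (2 <= a)%nat -> (a < b)%nat -> (b <= n - 2)%nat ->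
   F (INR n) (INR a) < F (INR n) (INR b)).
{ intros a b H1 H2 H3. apply mono.
  - replace 2 with (INR 2) by (simpl; ring). apply le_INR; lia.
  - apply lt_INR; lia.
  - replace (INR n - 2) with (INR (n - 2)). apply le_INR; lia.
    rewrite minus_INR by lia. simpl. ring. }
split; split.
- intros r r' H1 H2 H3 H4 H5.
  destruct (I0 r H1 ltac:(lia) H3) as [_ [_ E1]].
  destruct (I0 r' ltac:(lia) H2 H4) as [_ [_ E2']].
  rewrite E1, E2'. apply Mn; lia.
- intros r H1 H2 H3.
  destruct (I0 r H1 H2 H3) as [Hle [_ E1]].
  assert (H4 : ((n - 4) mod 4 = 0)%nat) by (apply (modc _ (m - 1)); lia).
  destruct (I0 (n - 4)%nat ltac:(lia) ltac:(lia) H4) as [_ [_ E2']].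
  replace (n - (n - 4))%nat with 4%nat in E2' by lia.
  rewrite E1, E2'.
  destruct (Nat.eq_dec r (n - 4)) as [->|Hne]; [lra|].
  left. apply Mn; lia.
- intros r r' H1 H2 H3 H4 H5.
  destruct (I2 r H1 ltac:(lia) H3) as [_ E1].
  destruct (I2 r' ltac:(lia) H2 H4) as [_ E2'].
  rewrite E1, E2'. apply Mn; lia.
- intros r H1 H2 H3.
  destruct (I2 r H1 H2 H3) as [_ E1].
  destruct (I2 2%nat ltac:(lia) ltac:(lia) eq_refl) as [_ E2'].
  rewrite E1, E2'.
  destruct (Nat.eq_dec r 2) as [->|Hne]; [lra|].
  left. apply Mn; lia.
Qed.
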